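(* Let $T,S\in\mathcal M_n(\mathbb C)$ and let $e,f,g,h$ be non-negative continuous functions on $[0,\infty)$ such that $f(t)g(t)=t$ and $e(t)h(t)=t$ for all $t\ge0$. Then $$s_j(T+S)\le\big\|g^2(|T^*|)+h^2(|S^*|)\big\|^{1/2}\,s_j^{1/2}\big(f^2(|T|)+e^2(|S|)\big)\quad\text{for every }j=1,\dots,n.$$ Furthermore, for every $p>0$, $$\|T+S\|_p\le\big\|g^2(|T^*|)+h^2(|S^*|)\big\|^{1/2}\,\big\|f^2(|T|)+e^2(|S|)\big\|_{p/2}^{1/2}.$$
   Context: $\mathcal M_n(\mathbb C)$ is the set of $n\times n$ complex matrices; $|T|=(T^*T)^{1/2}$; functions of positive matrices are defined by functional calculus. $s_1(T)\ge\dots\ge s_n(T)$ are the singular values of $T$ (eigenvalues of $|T|$). $\|T\|=s_1(T)$ is the operator norm, and for $p>0$, $\|T\|_p=\big(\sum_{j=1}^n s_j^p(T)\big)^{1/p}$ is the Schatten $p$-norm (a quasi-norm for $p<1$). *)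

(* Defs.v *)
From mathcomp Require Import all_boot all_order all_algebra.
From mathcomp Require Import complex.
From mathcomp Require Import classical_sets reals topology normedtype exp.
Set Implicit Arguments. Unset Strict Implicit. Unset Printing Implicit Defensive.
Import Order.TTheory GRing.Theory Num.Theory Num.Def.
Local Open Scope ring_scope.

Section MatrixFunctions.
Variable R : realType.
Local Notation C := R[i].

Definition adjmx n (A : 'M[C]_n) : 'M[C]_n := map_mx conjC A^T.

(* Functional calculus for a normal (in our uses: positive semidefinite)
   matrix A = U^* diag(l_1..l_n) U with U unitary (spectral theorem,
   spectral.v):  phi(A) := U^* diag(phi(Re l_1), ..., phi(Re l_n)) U.
   phi only needs to be given on the reals (the spectrum of a Hermitian
   matrix is real). *)
Definition fcalc (phi : R -> R) n (A : 'M[C]_n) : 'M[C]_n :=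
  invmx (spectralmx A)
  *m diag_mx (map_mx (fun z : C => (phi (complex.Re z))%:C%C) (spectral_diag A))
  *m spectralmx A.

Definition absmx n (T : 'M[C]_n) : 'M[C]_n := fcalc Num.sqrt (adjmx T *m T).

Definition eigvals n (A : 'M[C]_n) : seq R :=
  sort (fun x y : R => y <= x)
       [seq complex.Re (spectral_diag A 0 i) | i <- enum 'I_n].

Definition singvals n (T : 'M[C]_n) : seq R := eigvals (absmx T).

(* s_{j+1}(T) for j : 'I_n  (0-based index) *)
Definition sv n (T : 'M[C]_n) (j : nat) : R := nth 0 (singvals T) j.

Definition opnorm n (T : 'M[C]_n) : R := sv T 0.

Definition schatten (p : R) n (T : 'M[C]_n) : R :=
  powR (\sum_(x <- singvals T) powR x p) p^-1.

End MatrixFunctions.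

(* Main.v *)
Set Warnings "-notation-overridden -ambiguous-paths -notation-incompatible-prefix".
Require Import Defs.
From mathcomp Require Import all_boot all_order all_algebra.
From mathcomp Require Import complex.
From mathcomp Require Import classical_sets reals topology normedtype exp.
From mathcomp Require Import ring lra.
Import Order.TTheory GRing.Theory Num.Theory.
Local Open Scope ring_scope.

Set Implicit Arguments. Unset Strict Implicit. Unset Printing Implicit Defensive.

Section P1.
Local Open Scope sesquilinear_scope.
Variable R : realType.
Local Notation C := R[i].

Lemma core_diag m n (d : 'rV[C]_n) (e : 'rV[C]_m) (M : 'M[C]_(m,n)) (phi : C -> C) :
  diag_mx e *m M = M *m diag_mx d ->
  diag_mx (map_mx phi e) *m M = M *m diag_mx (map_mx phi d).
Proof.
move=> H; apply/matrixP => i j.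
have Hij : e 0 i * M i j = M i j * d 0 j.
  by move/matrixP: H => /(_ i j); rewrite (mul_diag_mx e) (mul_mx_diag M d) !mxE.
rewrite (mul_diag_mx (map_mx phi e)) (mul_mx_diag M (map_mx phi d)) !mxE.
have [->|nz] := eqVneq (M i j) 0; first by rewrite mulr0 mul0r.
have -> : e 0 i = d 0 j by apply: (mulIf nz); rewrite Hij mulrC.
by rewrite mulrC.
Qed.

Arguments core_diag {m n d e M} phi.

Lemma unitary_tK {n} {P : 'M[C]_n} : P \is unitarymx -> P^t* *m P = 1%:M.
Proof. by move=> PU; rewrite -[P^t*]mul1mx mulmxKtV. Qed.

Lemma unitary_Kt {n} {P : 'M[C]_n} : P \is unitarymx -> P *m P^t* = 1%:M.
Proof. by move/unitarymxP. Qed.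

Lemma decomp_normal n (P : 'M[C]_n) d : P \is unitarymx ->
  P^t* *m diag_mx d *m P \is normalmx.
Proof.
move=> PU; apply/orthomx_spectral_subproof; exists (P, d) => //=.
by rewrite invmx_unitary.
Qed.

Lemma spectral_dec n (A : 'M[C]_n) : A \is normalmx ->
  A = (spectralmx A)^t* *m diag_mx (spectral_diag A) *m spectralmx A.
Proof.
move=> /orthomx_spectralP {1}->; by rewrite invmx_unitary // spectral_unitarymx.
Qed.

Arguments spectral_dec {n A}.
Arguments decomp_normal {n P} d.

Lemma dec_unique n (P Q : 'M[C]_n) d e (psi : C -> C) :
  P \is unitarymx -> Q \is unitarymx ->
  Q^t* *m diag_mx e *m Q = P^t* *m diag_mx d *m P ->
  Q^t* *m diag_mx (map_mx psi e) *m Q = P^t* *m diag_mx (map_mx psi d) *m P.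
Proof.
move=> PU QU H.
set M := Q *m P^t*.
have HM : diag_mx e *m M = M *m diag_mx d.
  have := congr1 (fun A => Q *m A *m P^t*) H; rewrite /=.
  rewrite !mulmxA (unitary_Kt QU) mul1mx.
  rewrite -!(mulmxA _ P) (unitary_Kt PU) mulmx1 => ->.
  by [].
have := core_diag psi HM => HM'.
rewrite -[X in _ *m X = _](mulmx1 Q) -(unitary_tK PU) !mulmxA.
rewrite -[_ *m Q *m P^t*]mulmxA -/M -[_ *m _ *m M]mulmxA HM' !mulmxA.
by rewrite /M (unitary_tK QU) mul1mx.
Qed.

Definition liftR (phi : R -> R) := fun z : C => (phi (complex.Re z))%:C%C.

Lemma fcalcE (phi : R -> R) n (A : 'M[C]_n) :
  fcalc phi A = (spectralmx A)^t* *m diag_mx (map_mx (liftR phi) (spectral_diag A)) *m spectralmx A.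
Proof. by rewrite /fcalc invmx_unitary // spectral_unitarymx. Qed.

Lemma fcalc_dec phi n (P : 'M[C]_n) d : P \is unitarymx ->
  fcalc phi (P^t* *m diag_mx d *m P) = P^t* *m diag_mx (map_mx (liftR phi) d) *m P.
Proof.
move=> PU; rewrite fcalcE; apply: dec_unique => //; first exact: spectral_unitarymx.
by rewrite -spectral_dec // decomp_normal.
Qed.

Lemma fcalc_eig phi n (A W : 'M[C]_n) (l : 'rV[C]_n) : A \is normalmx ->
  A *m W = W *m diag_mx l ->
  fcalc phi A *m W = W *m diag_mx (map_mx (liftR phi) l).
Proof.
move=> An AW; rewrite fcalcE.
set Q := spectralmx A; set e := spectral_diag A.
have QU : Q \is unitarymx by exact: spectral_unitarymx.
have H : diag_mx e *m (Q *m W) = (Q *m W) *m diag_mx l.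
  have := congr1 (fun B => Q *m B) AW; rewrite /= {1}(spectral_dec An) -/Q -/e.
  by rewrite !mulmxA (unitary_Kt QU) mul1mx => ->.
have := core_diag (liftR phi) H => H'.
by rewrite -!mulmxA H' !mulmxA (unitary_tK QU) mul1mx.
Qed.

End P1.

Section P2.
Local Open Scope sesquilinear_scope.
Variable R : realType.
Local Notation C := R[i].

Lemma ge0_ReC (z : C) : 0 <= z -> z = (complex.Re z)%:C%C.
Proof. by move=> z0; rewrite RRe_real // ger0_real. Qed.

Lemma ge0_Re (z : C) : 0 <= z -> 0 <= complex.Re z.
Proof. by move=> z0; rewrite -ler0c -ge0_ReC. Qed.

Lemma adjM m n p (A : 'M[C]_(m,n)) (B : 'M[C]_(n,p)) : (A *m B)^t* = B^t* *m A^t*.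
Proof. by rewrite trmx_mul map_mxM. Qed.

Lemma adjK m n (A : 'M[C]_(m,n)) : A^t*^t* = A.
Proof. exact: trmxCK. Qed.

Lemma adjD m n (A B : 'M[C]_(m,n)) : (A + B)^t* = A^t* + B^t*.
Proof. by rewrite linearD /= map_mxD. Qed.

Lemma adj_diag n (d : 'rV[C]_n) : (diag_mx d)^t* = diag_mx (map_mx Num.conj d).
Proof. by rewrite tr_diag_mx map_diag_mx. Qed.

Definition qf n (A : 'M[C]_n) (x : 'rV[C]_n) := (x *m A *m x^t*) 0 0.
Definition nrm n (x : 'rV[C]_n) := (x *m x^t*) 0 0.

Lemma nrmE n (x : 'rV[C]_n) : nrm x = \sum_i x 0 i * (x 0 i)^*.
Proof. by rewrite /nrm mxE; apply: eq_bigr => i _; rewrite !mxE. Qed.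

Lemma nrm_ge0 n (x : 'rV[C]_n) : 0 <= nrm x.
Proof. by rewrite nrmE sumr_ge0 // => i _; rewrite mul_conjC_ge0. Qed.

Lemma nrm_eq0 n (x : 'rV[C]_n) : (nrm x == 0) = (x == 0).
Proof.
rewrite nrmE psumr_eq0 => [|i _]; last by rewrite mul_conjC_ge0.
apply/allP/eqP => [H|->]; last by move=> i _ /=; rewrite mxE mul0r.
apply/rowP => i; rewrite mxE; have := H i (mem_index_enum _).
by rewrite /= mul_conjC_eq0 => /eqP.
Qed.

Lemma qf_dec n (P : 'M[C]_n) d x :
  qf (P^t* *m diag_mx d *m P) x =
  \sum_i d 0 i * ((x *m P^t*) 0 i * ((x *m P^t*) 0 i)^*).
Proof.
have E : P *m x^t* = (x *m P^t*)^t* by rewrite adjM adjK.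
rewrite /qf !mulmxA -(mulmxA _ P) E -!mulmxA mulmxA mxE; apply: eq_bigr => i _.
rewrite (mul_diag_mx d) !mxE; set y := (x *m P^t*) 0 i.
by rewrite mulrCA.
Qed.

Lemma nrm_unitary n (P : 'M[C]_n) x : P \is unitarymx -> nrm (x *m P^t*) = nrm x.
Proof.
move=> PU; rewrite /nrm adjM adjK !mulmxA -(mulmxA x) (unitary_tK PU) mulmx1 //.
Qed.

Lemma qfD n (A B : 'M[C]_n) x : qf (A + B) x = qf A x + qf B x.
Proof. by rewrite /qf mulmxDr mulmxDl mxE. Qed.

Definition psdmx n (A : 'M[C]_n) := exists P, exists d : 'rV[C]_n,
  [/\ P \is unitarymx, forall i, 0 <= d 0 i & A = P^t* *m diag_mx d *m P].

Lemma qf_psd n (A : 'M[C]_n) x : psdmx A -> 0 <= qf A x.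
Proof.
case=> P [d [PU d0 ->]]; rewrite qf_dec sumr_ge0 // => i _.
by rewrite mulr_ge0 // mul_conjC_ge0.
Qed.

Lemma psd_herm n (A : 'M[C]_n) : psdmx A -> A^t* = A.
Proof.
case=> P [d [PU d0 ->]]; rewrite !adjM adjK adj_diag.
have -> : map_mx Num.conj d = d by apply/rowP => i; rewrite !mxE geC0_conj.
exact: mulmxA.
Qed.

Lemma herm_normal n (A : 'M[C]_n) : A^t* = A -> A \is normalmx.
Proof. by move=> H; apply/normalmxP; rewrite H. Qed.

Lemma qf_row n (A : 'M[C]_n) (M : 'M[C]_n) i :
  qf A (row i M) = (M *m A *m M^t*) i i.
Proof.
rewrite /qf !mxE; apply: eq_bigr => k _; rewrite !mxE; congr (_ * _).
by apply: eq_bigr => l _; rewrite !mxE.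
Qed.

Lemma spec_diag_qf n (A : 'M[C]_n) i : A \is normalmx ->
  spectral_diag A 0 i = qf A (row i (spectralmx A)).
Proof.
move=> An; rewrite qf_row; have QU := spectral_unitarymx A.
set Q := spectralmx A in QU *; set e := spectral_diag A.
rewrite {1}(spectral_dec An) -/Q -/e.
rewrite !mulmxA (unitary_Kt QU) mul1mx -mulmxA (unitary_Kt QU) mulmx1.
by rewrite mxE eqxx mulr1n.
Qed.

Lemma psd_of_qf n (A : 'M[C]_n) : A^t* = A -> (forall x, 0 <= qf A x) -> psdmx A.
Proof.
move=> H Hq; have An := herm_normal H.
exists (spectralmx A), (spectral_diag A); split.
- exact: spectral_unitarymx.
- by move=> i; rewrite spec_diag_qf.
- exact: spectral_dec.
Qed.

Lemma psd_spec n (A : 'M[C]_n) : psdmx A ->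
  [/\ A = (spectralmx A)^t* *m diag_mx (spectral_diag A) *m spectralmx A,
      A \is normalmx & forall i, 0 <= spectral_diag A 0 i].
Proof.
move=> Ap; have An := herm_normal (psd_herm Ap).
split => //; first exact: spectral_dec.
by move=> i; rewrite spec_diag_qf // qf_psd.
Qed.

Lemma psdD n (A B : 'M[C]_n) : psdmx A -> psdmx B -> psdmx (A + B).
Proof.
move=> Ap Bp; apply: psd_of_qf; first by rewrite adjD !psd_herm.
by move=> x; rewrite qfD addr_ge0 // qf_psd.
Qed.

Lemma lift_ge0 (phi : R -> R) (z : C) : (forall t, 0 <= t -> 0 <= phi t) -> 0 <= z ->
  0 <= liftR phi z.
Proof. by move=> Hp z0; rewrite /liftR ler0c Hp // ge0_Re. Qed.

Lemma fcalc_psd (phi : R -> R) n (A : 'M[C]_n) :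
  (forall t, 0 <= t -> 0 <= phi t) -> psdmx A -> psdmx (fcalc phi A).
Proof.
move=> Hp [P [d [PU d0 ->]]]; rewrite fcalc_dec //.
exists P, (map_mx (liftR phi) d); split => // i.
by rewrite mxE lift_ge0.
Qed.

Lemma XtX_psd n (X : 'M[C]_n) : psdmx (X^t* *m X).
Proof.
apply: psd_of_qf; first by rewrite adjM adjK.
move=> x; have := nrm_ge0 (x *m X^t*).
by rewrite /nrm /qf adjM adjK !mulmxA.
Qed.

Lemma sqrt_lift_sq (z : C) : 0 <= z -> liftR Num.sqrt (z * z) = z.
Proof.
move=> z0; rewrite {1 2}(ge0_ReC z0) /liftR -rmorphM /= -expr2 sqrtr_sqr.
by rewrite ger0_norm ?ge0_Re // -ge0_ReC.
Qed.

Lemma absmx_psd_id n (A : 'M[C]_n) : psdmx A -> absmx A = A.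
Proof.
move=> Ap; have H := psd_herm Ap; case: Ap => P [d [PU d0 AE]].
rewrite /absmx /adjmx H {1 2}AE.
have -> : P^t* *m diag_mx d *m P *m (P^t* *m diag_mx d *m P) =
          P^t* *m diag_mx (\row_j (d 0 j * d 0 j)) *m P.
  by rewrite !mulmxA -(mulmxA _ P) (unitary_Kt PU) mulmx1 -(mulmxA (P^t*) (diag_mx d) (diag_mx d)) (mulmx_diag d d).
rewrite fcalc_dec // AE; congr (_ *m diag_mx _ *m _).
by apply/rowP => i; rewrite !mxE sqrt_lift_sq.
Qed.

Lemma absmx_dec n (X : 'M[C]_n) : exists P, exists d : 'rV[C]_n,
  [/\ P \is unitarymx, forall i, 0 <= d 0 i, X^t* *m X = P^t* *m diag_mx d *m P &
      absmx X = P^t* *m diag_mx (map_mx (liftR Num.sqrt) d) *m P].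
Proof.
have [P [d [PU d0 E]]] := XtX_psd X.
exists P, d; split => //.
by rewrite /absmx /adjmx E fcalc_dec.
Qed.

Lemma absmx_psd n (X : 'M[C]_n) : psdmx (absmx X).
Proof.
have [P [d [PU d0 _ ->]]] := absmx_dec X.
exists P, (map_mx (liftR Num.sqrt) d); split => // i.
by rewrite mxE lift_ge0 // => t t0; rewrite sqrtr_ge0.
Qed.

Lemma absmx_sq n (X : 'M[C]_n) : absmx X *m absmx X = X^t* *m X.
Proof.
have [P [d [PU d0 E ->]]] := absmx_dec X.
rewrite E !mulmxA -(mulmxA _ P) (unitary_Kt PU) mulmx1.
set D := map_mx _ d; rewrite -(mulmxA (P^t*) (diag_mx D) (diag_mx D)) (mulmx_diag D D).
congr (_ *m diag_mx _ *m _); apply/rowP => i; rewrite !mxE.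
have di := d0 i; rewrite {3}(ge0_ReC di) /liftR -rmorphM /= -expr2 sqr_sqrtr //.
exact: ge0_Re.
Qed.

End P2.

Section P3.
Local Open Scope sesquilinear_scope.
Variable R : realType.
Local Notation C := R[i].

Fact dg_key : unit. Proof. exact: tt. Qed.
Definition dg n (a : 'I_n -> R) : 'M[C]_n := locked_with dg_key (diag_mx (\row_i (a i)%:C%C)).
Lemma dgE n (a : 'I_n -> R) : dg a = diag_mx (\row_i (a i)%:C%C).
Proof. by rewrite /dg unlock. Qed.

Lemma dgM n (a b : 'I_n -> R) : dg a *m dg b = dg (fun i => a i * b i).
Proof.
rewrite !dgE (mulmx_diag (\row_i (a i)%:C%C)); congr diag_mx.
by apply/rowP => i; rewrite !mxE rmorphM.
Qed.

Lemma dgC n (a b : 'I_n -> R) : dg a *m dg b = dg b *m dg a.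
Proof. by rewrite !dgM !dgE; congr diag_mx; apply/rowP => i; rewrite !mxE mulrC. Qed.

Lemma dg_adj n (a : 'I_n -> R) : (dg a)^t* = dg a.
Proof.
rewrite dgE adj_diag; congr diag_mx; apply/rowP => i; rewrite !mxE.
exact: conjc_real.
Qed.

Lemma qfB n (A B : 'M[C]_n) x : qf (A - B) x = qf A x - qf B x.
Proof. by rewrite /qf mulmxBr mulmxBl !mxE. Qed.

Lemma adjB m n (A B : 'M[C]_(m,n)) : (A - B)^t* = A^t* - B^t*.
Proof. by rewrite linearB /= map_mxB. Qed.

Lemma adj1 n : (1%:M : 'M[C]_n)^t* = 1%:M.
Proof. by rewrite trmx1 map_mx1. Qed.

Lemma bessel n (H W : 'M[C]_n) (m : 'I_n -> R) :
  psdmx H -> H *m W = W *m dg m -> W *m W^t* *m W = W ->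
  forall w, qf (W *m dg m *m W^t*) w <= qf H w.
Proof.
move=> Hp HW WW w; have Hh := psd_herm Hp.
set M := dg m; set Pi := W *m W^t*.
have PiA : Pi^t* = Pi by rewrite /Pi adjM adjK.
have WW' : W^t* *m W *m W^t* = W^t*.
  by have := congr1 (fun X => X^t*) WW; rewrite /= !adjM adjK mulmxA.
have HPi : H *m Pi = W *m M *m W^t* by rewrite /Pi mulmxA HW.
have PiH : Pi *m H = W *m M *m W^t*.
  have E : W^t* *m H = M *m W^t*.
    by rewrite -{1}Hh -adjM HW adjM dg_adj.
  by rewrite /Pi -mulmxA E mulmxA.
have PiHPi : Pi *m H *m Pi = W *m M *m W^t*.
  by rewrite PiH /Pi -!mulmxA (mulmxA (W^t*)) WW'.
have K : H - W *m M *m W^t* = (1%:M - Pi) *m H *m (1%:M - Pi).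
  rewrite mulmxBl mul1mx PiH mulmxBr mulmx1 mulmxBl HPi -PiH PiHPi.
  by rewrite PiH subrr subr0.
rewrite -subr_ge0 -qfB K.
have -> : qf ((1%:M - Pi) *m H *m (1%:M - Pi)) w = qf H (w *m (1%:M - Pi)).
  by rewrite /qf adjM adjB adj1 PiA !mulmxA.
exact: qf_psd.
Qed.

Lemma dg_ext n (a b : 'I_n -> R) : (forall i, a i = b i) -> dg a = dg b.
Proof. by move=> H; rewrite !dgE; congr diag_mx; apply/rowP => i; rewrite !mxE H. Qed.

Lemma col_zero n (Y : 'M[C]_n) i : (Y^t* *m Y) i i = 0 -> forall k, Y k i = 0.
Proof.
rewrite mxE => /eqP; rewrite psumr_eq0 => [/allP H k|k _]; last first.
  by rewrite !mxE mulrC mul_conjC_ge0.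
by have := H k (mem_index_enum _); rewrite /= !mxE mulrC mul_conjC_eq0 => /eqP.
Qed.

Lemma T_struct n (T : 'M[C]_n) : exists P, exists s : 'I_n -> R, exists W : 'M[C]_n,
  [/\ P \is unitarymx, (forall i, 0 <= s i), T = W *m dg s *m P,
      W *m W^t* *m W = W &
      absmx T = P^t* *m dg s *m P /\ (T *m T^t*) *m W = W *m dg (fun i => s i ^+ 2)].
Proof.
have [P [d [PU d0 E Eabs]]] := absmx_dec T.
pose s i := Num.sqrt (complex.Re (d 0 i)).
have s0 : forall i, 0 <= s i by move=> i; exact: sqrtr_ge0.
have dE : diag_mx d = dg (fun i => s i ^+ 2).
  rewrite dgE; congr diag_mx; apply/rowP => i; rewrite mxE /s sqr_sqrtr ?ge0_Re //.
  exact: ge0_ReC.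
have absE : diag_mx (map_mx (liftR Num.sqrt) d) = dg s.
  by rewrite dgE; congr diag_mx; apply/rowP => i; rewrite !mxE.
have [Y YE] : {Y | Y = T *m P^t*} by exists (T *m P^t*).
have YY : Y^t* *m Y = dg (fun i => s i ^+ 2).
  rewrite YE adjM adjK !mulmxA -(mulmxA P) E -dE !mulmxA (unitary_Kt PU) mul1mx.
  by rewrite -mulmxA (unitary_Kt PU) mulmx1.
pose si i := (s i)^-1.
pose W := Y *m dg si.
have Ycol : forall k i, s i = 0 -> Y k i = 0.
  move=> k i si0; apply: col_zero; rewrite YY dgE mxE eqxx mulr1n mxE si0.
  by rewrite expr0n.
have YW : W *m dg s = Y.
  rewrite /W -mulmxA dgM; apply/matrixP => k i; rewrite dgE (mul_mx_diag Y) !mxE.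
  have [si0|nz] := eqVneq (s i) 0; first by rewrite Ycol // mul0r.
  by rewrite /si mulVf // mulr1.
have TE : T = Y *m P by rewrite YE -mulmxA (unitary_tK PU) mulmx1.
exists P, s, W; split; [exact: PU | exact: s0 | by rewrite YW | | ].
- rewrite /W adjM dg_adj !mulmxA -(mulmxA _ (Y^t*)) YY -!mulmxA !dgM.
  congr (_ *m _); apply: dg_ext => i; rewrite /si.
  have [->|nz] := eqVneq (s i) 0; first by rewrite invr0 !mul0r.
  by rewrite expr2 mulfK // mulVf // mulr1.
- split; first by rewrite Eabs absE.
  rewrite TE adjM -!mulmxA (mulmxA P) (unitary_Kt PU) mul1mx.
  rewrite /W !mulmxA -(mulmxA Y (Y^t*) Y) YY -!mulmxA dgC.
  by [].
Qed.

End P3.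

Section P4.
Local Open Scope sesquilinear_scope.
Variable R : realType.
Local Notation C := R[i].

Lemma cs m (u v : 'rV[C]_m) : `|(u *m v^t*) 0 0| ^+ 2 <= nrm u * nrm v.
Proof.
have H : `|dotmx u v| ^+ 2 <= dotmx u u * dotmx v v := (CauchySchwarz (dotmx (n:=m)) u v).1.
by rewrite !dotmxE in H.
Qed.

Lemma liftR_dg (phi : R -> R) n (a : 'I_n -> R) :
  diag_mx (map_mx (liftR phi) (\row_i (a i)%:C%C)) = dg (fun i => phi (a i)).
Proof. by rewrite dgE; congr diag_mx; apply/rowP => i; rewrite !mxE /liftR /=. Qed.

Lemma fcalc_dg (phi : R -> R) n (P : 'M[C]_n) (a : 'I_n -> R) : P \is unitarymx ->
  fcalc phi (P^t* *m dg a *m P) = P^t* *m dg (fun i => phi (a i)) *m P.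
Proof. by move=> PU; rewrite dgE fcalc_dec // liftR_dg. Qed.

Lemma fcalc_eig_dg (phi : R -> R) n (A W : 'M[C]_n) (a : 'I_n -> R) : A \is normalmx ->
  A *m W = W *m dg a -> fcalc phi A *m W = W *m dg (fun i => phi (a i)).
Proof. by move=> An; rewrite dgE => AW; rewrite (fcalc_eig _ An AW) liftR_dg. Qed.

Lemma mixed n (T : 'M[C]_n) (f g : R -> R) :
  (forall t, 0 <= t -> f t * g t = t) ->
  exists A : 'M[C]_n, exists B : 'M[C]_n, forall x w,
  [/\ (x *m T^t* *m w^t*) 0 0 = (x *m A *m (w *m B)^t*) 0 0,
      nrm (x *m A) = qf (fcalc (fun t => f t ^+ 2) (absmx T)) x &
      nrm (w *m B) <= qf (fcalc (fun t => g t ^+ 2) (absmx (adjmx T))) w].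
Proof.
move=> fg.
have [P [s [W [PU s0 TE WW [Eabs TTW]]]]] := T_struct T.
exists (P^t* *m dg (fun i => f (s i))), (W *m dg (fun i => g (s i))) => x w; split.
- have E : dg s = dg (fun i => f (s i)) *m dg (fun i => g (s i)).
    by rewrite dgM; apply: dg_ext => i; rewrite fg.
  rewrite TE !adjM !dg_adj E !mulmxA.
  by [].
- rewrite /nrm /qf Eabs fcalc_dg // !adjM adjK dg_adj !mulmxA.
  rewrite -(mulmxA (x *m P^t*)) dgM.
  by rewrite (dg_ext (b := fun i => f (s i) ^+ 2)) // => i; rewrite expr2.
- have Hp : psdmx (fcalc (fun t => g t ^+ 2) (absmx (adjmx T))).
    by apply: fcalc_psd; [move=> t _; exact: sqr_ge0 | exact: absmx_psd].
  have HW : fcalc (fun t => g t ^+ 2) (absmx (adjmx T)) *m W =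
            W *m dg (fun i => g (s i) ^+ 2).
    apply: fcalc_eig_dg.
      exact: herm_normal (psd_herm (absmx_psd _)).
    rewrite /absmx /adjmx adjK; rewrite -/(adjmx T).
    rewrite (fcalc_eig_dg _ _ TTW); last by apply: herm_normal; rewrite adjM adjK.
    by congr (_ *m _); apply: dg_ext => i; rewrite sqrtr_sqr ger0_norm.
  have := bessel Hp HW WW w.
  congr (_ <= _); rewrite /nrm /qf !adjM dg_adj !mulmxA.
  rewrite -(mulmxA (w *m W) (dg (fun i => g (s i)))) dgM.
  by rewrite (dg_ext (b := fun i => g (s i) ^+ 2)) // => i; rewrite expr2.
Qed.

Lemma nrm_row m1 m2 (a : 'rV[C]_m1) (b : 'rV[C]_m2) : nrm (row_mx a b) = nrm a + nrm b.
Proof. by rewrite /nrm tr_row_mx map_col_mx mul_row_col mxE. Qed.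

Lemma loewner_gen n (T S F1 F2 G1 G2 : 'M[C]_n) :
  (exists A : 'M[C]_n, exists B : 'M[C]_n, forall x w,
  [/\ (x *m T^t* *m w^t*) 0 0 = (x *m A *m (w *m B)^t*) 0 0,
      nrm (x *m A) = qf F1 x & nrm (w *m B) <= qf G1 w]) ->
  (exists A : 'M[C]_n, exists B : 'M[C]_n, forall x w,
  [/\ (x *m S^t* *m w^t*) 0 0 = (x *m A *m (w *m B)^t*) 0 0,
      nrm (x *m A) = qf F2 x & nrm (w *m B) <= qf G2 w]) ->
  forall x w, `|(x *m (T + S)^t* *m w^t*) 0 0| ^+ 2 <= qf (F1 + F2) x * qf (G1 + G2) w.
Proof.
move=> [A1 [B1 H1]] [A2 [B2 H2]] x w.
have [E1 N1 M1] := H1 x w; have [E2 N2 M2] := H2 x w.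
set u := row_mx (x *m A1) (x *m A2); set v := row_mx (w *m B1) (w *m B2).
have -> : (x *m (T + S)^t* *m w^t*) 0 0 = (u *m v^t*) 0 0.
  rewrite adjD mulmxDr mulmxDl [LHS]mxE E1 E2 /u /v tr_row_mx map_col_mx mul_row_col.
  by rewrite [RHS]mxE.
apply: le_trans (cs u v) _.
rewrite /u /v !nrm_row N1 N2 -qfD; apply: ler_pM.
- by rewrite qfD -N1 -N2 addr_ge0 // nrm_ge0.
- by rewrite addr_ge0 // nrm_ge0.
- exact: lexx.
- by rewrite qfD lerD.
Qed.

Lemma loewner_cs n (T S : 'M[C]_n) (e f g h : R -> R) :
  (forall t, 0 <= t -> f t * g t = t) ->
  (forall t, 0 <= t -> e t * h t = t) ->
  let G := fcalc (fun t => g t ^+ 2) (absmx (adjmx T))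
           + fcalc (fun t => h t ^+ 2) (absmx (adjmx S)) in
  let F := fcalc (fun t => f t ^+ 2) (absmx T)
           + fcalc (fun t => e t ^+ 2) (absmx S) in
  forall x w, `|(x *m (T + S)^t* *m w^t*) 0 0| ^+ 2 <= qf F x * qf G w.
Proof.
move=> fg eh G F; exact: loewner_gen (mixed T fg) (mixed S eh).
Qed.

End P4.

Section P5.
Variable R : realType.

Definition ge' := fun x y : R => y <= x.

Lemma ge'_tr : transitive ge'.
Proof. by move=> y x z h1 h2; rewrite /ge' (le_trans h2 h1). Qed.

Lemma ge'_refl : reflexive ge'.
Proof. by move=> x; rewrite /ge'. Qed.

Lemma ge'_total : total ge'.
Proof. by move=> x y; rewrite /ge' le_total. Qed.

Lemma sort_sorted' (s : seq R) : sorted ge' (sort ge' s).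
Proof. exact: (sort_sorted ge'_total s). Qed.

Lemma sort_nth_le (s : seq R) k j : (k <= j < size s)%N ->
  nth 0 (sort ge' s) j <= nth 0 (sort ge' s) k.
Proof.
move=> /andP[kj js].
have := @sorted_leq_nth _ ge' ge'_tr ge'_refl 0 _ (sort_sorted' s) k j.
rewrite !inE size_sort => H; apply: H => //; exact: leq_ltn_trans js.
Qed.

Lemma sort_count_ge (s : seq R) j : (j < size s)%N ->
  (j.+1 <= count (fun v => (nth 0 (sort ge' s) j <= v)%R) s)%N.
Proof.
move=> js; set t := sort ge' s; set p := (X in count X s).
have Hp : perm_eq t s by rewrite /t perm_sort.
rewrite -(permP Hp p).
have szt : size t = size s by rewrite size_sort.
rewrite -(cat_take_drop j.+1 t) count_cat.
apply: leq_trans (leq_addr _ _).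
have Hsz : size (take j.+1 t) = j.+1 by rewrite size_takel // szt.
suff /eqP -> : count p (take j.+1 t) == size (take j.+1 t) by rewrite Hsz.
rewrite -all_count; apply/(all_nthP 0) => k; rewrite Hsz => kj.
by rewrite nth_take // /p; apply: sort_nth_le; rewrite -ltnS kj.
Qed.

Lemma sort_count_le (s : seq R) j : (j < size s)%N ->
  (size s - j <= count (fun v => (v <= nth 0 (sort ge' s) j)%R) s)%N.
Proof.
move=> js; set t := sort ge' s; set p := (X in count X s).
have Hp : perm_eq t s by rewrite /t perm_sort.
rewrite -(permP Hp p).
have szt : size t = size s by rewrite size_sort.
rewrite -(cat_take_drop j t) count_cat.
apply: leq_trans (leq_addl _ _).
have Hsz : size (drop j t) = (size s - j)%N by rewrite size_drop szt.
suff /eqP -> : count p (drop j t) == size (drop j t) by rewrite Hsz.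
rewrite -all_count; apply/(all_nthP 0) => k; rewrite Hsz => kj.
rewrite nth_drop /p sort_nth_le // leq_addr /=.
by rewrite -ltn_subRL.
Qed.

Lemma sort_head_ge (s : seq R) x : x \in s -> x <= nth 0 (sort ge' s) 0.
Proof.
move=> xs; have : x \in sort ge' s by rewrite mem_sort.
move=> /(nthP 0) [k ks <-]; apply: sort_nth_le.
by rewrite leq0n /= -(size_sort ge').
Qed.

Lemma sort_nth_mem (s : seq R) j : (j < size s)%N -> nth 0 (sort ge' s) j \in s.
Proof. by move=> js; rewrite -(mem_sort ge') mem_nth // size_sort. Qed.

Lemma cnt n (P : pred 'I_n) : count P (enum 'I_n) = #|P|.
Proof. by rewrite cardE -size_filter /enum_mem filter_predT. Qed.

End P5.

Section P6.
Local Open Scope sesquilinear_scope.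
Variable R : realType.
Local Notation C := R[i].

Definition selmx n (I : {pred 'I_n}) : 'M[C]_(#|I|, n) :=
  \matrix_(k, i) ((enum_val k == i)%:R).

Lemma selmx_unitary n (I : {pred 'I_n}) : selmx I \is unitarymx.
Proof.
apply/unitarymxP/matrixP => k l; rewrite !mxE.
rewrite (bigD1 (enum_val k)) //= big1 => [|i /negbTE ne]; last first.
  by rewrite !mxE eq_sym ne mul0r.
rewrite !mxE eqxx mul1r addr0 (inj_eq enum_val_inj).
by rewrite eq_sym; case: (k == l); rewrite ?conjC1 ?conjC0.
Qed.

Lemma selmx_supp n (I : {pred 'I_n}) (D : 'rV[C]_#|I|) i :
  i \notin I -> (D *m selmx I) 0 i = 0.
Proof.
move=> iI; rewrite mxE big1 // => k _; rewrite mxE.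
have : enum_val k != i by apply: contraNneq iI => <-; exact: enum_valP.
by move/negbTE => ->; rewrite mulr0.
Qed.

Lemma dim_arg n (Q1 Q2 : 'M[C]_n) (I J : {pred 'I_n}) :
  Q1 \is unitarymx -> Q2 \is unitarymx -> (n < #|I| + #|J|)%N ->
  exists x : 'rV[C]_n, [/\ x != 0,
    forall i, i \notin I -> (x *m Q1^t*) 0 i = 0 &
    forall i, i \notin J -> (x *m Q2^t*) 0 i = 0].
Proof.
move=> Q1U Q2U hIJ.
set V := selmx I *m Q1; set W := selmx J *m Q2.
have rV : \rank V = #|I| by apply: mxrank_unitary; apply: mul_unitarymx => //; exact: selmx_unitary.
have rW : \rank W = #|J| by apply: mxrank_unitary; apply: mul_unitarymx => //; exact: selmx_unitary.
have := mxrank_sum_cap V W; rewrite rV rW => E.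
have cap_nz : (V :&: W)%MS != 0.
  rewrite -mxrank_eq0; apply/eqP => E0; move: E; rewrite E0 addn0 => E.
  by have := rank_leq_col (V + W)%MS; rewrite E leqNgt hIJ.
have [r nzr] : exists r, row r (V :&: W)%MS != 0.
  apply/existsP; apply: contraNT cap_nz; rewrite negb_exists => /forallP H.
  by apply/eqP/row_matrixP => r; rewrite row0; apply/eqP; have := H r; rewrite negbK.
set x := row r (V :&: W)%MS.
have := row_sub r (V :&: W)%MS; rewrite -/x sub_capmx => /andP[/submxP[D1 xD1] /submxP[D2 xD2]].
exists x; split => // i iI.
- by rewrite xD1 /V !mulmxA -(mulmxA _ Q1) (unitary_Kt Q1U) mulmx1 selmx_supp.
- by rewrite xD2 /W !mulmxA -(mulmxA _ Q2) (unitary_Kt Q2U) mulmx1 selmx_supp.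
Qed.

End P6.

Section P7.
Local Open Scope sesquilinear_scope.
Variable R : realType.
Local Notation C := R[i].

Definition evs n (A : 'M[C]_n) : seq R :=
  [seq complex.Re (spectral_diag A 0 i) | i <- enum 'I_n].

Lemma eigvalsE n (A : 'M[C]_n) : eigvals A = sort (@ge' R) (evs A).
Proof. by []. Qed.

Lemma size_evs n (A : 'M[C]_n) : size (evs A) = n.
Proof. by rewrite size_map size_enum_ord. Qed.

Lemma evs_ge0 n (A : 'M[C]_n) : psdmx A -> forall v, v \in evs A -> 0 <= v.
Proof.
move=> Ap v /mapP [i _ ->]; have [_ _ e0] := psd_spec Ap; exact: ge0_Re.
Qed.

Lemma eig_nth_ge0 n (A : 'M[C]_n) j : psdmx A -> 0 <= nth 0 (eigvals A) j.
Proof.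
move=> Ap; have [js|js] := ltnP j (size (eigvals A)); last by rewrite nth_default.
apply: (evs_ge0 Ap); rewrite -(mem_sort (@ge' R)); exact: mem_nth.
Qed.

Lemma qf_upper n (Q : 'M[C]_n) (e : 'rV[C]_n) (b : C) x : Q \is unitarymx ->
  (forall i, (x *m Q^t*) 0 i != 0 -> e 0 i <= b) ->
  qf (Q^t* *m diag_mx e *m Q) x <= b * nrm x.
Proof.
move=> QU H; rewrite qf_dec -(nrm_unitary x QU) nrmE mulr_sumr.
apply: ler_sum => i _.
have [y0|nz] := eqVneq ((x *m Q^t*) 0 i) 0; first by rewrite y0 mul0r !mulr0.
by rewrite ler_wpM2r ?mul_conjC_ge0 ?H.
Qed.

Lemma qf_lower n (Q : 'M[C]_n) (e : 'rV[C]_n) (a : C) x : Q \is unitarymx ->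
  (forall i, (x *m Q^t*) 0 i != 0 -> a <= e 0 i) ->
  a * nrm x <= qf (Q^t* *m diag_mx e *m Q) x.
Proof.
move=> QU H; rewrite qf_dec -(nrm_unitary x QU) nrmE mulr_sumr.
apply: ler_sum => i _.
have [y0|nz] := eqVneq ((x *m Q^t*) 0 i) 0; first by rewrite y0 mul0r !mulr0.
by rewrite ler_wpM2r ?mul_conjC_ge0 ?H.
Qed.

Lemma eig_compare n (A B : 'M[C]_n) (K : R) (j : nat) : (j < n)%N -> 0 <= K ->
  psdmx A -> psdmx B ->
  (forall x, qf (A *m A) x <= K%:C%C * qf B x) ->
  (nth 0 (eigvals A) j) ^+ 2 <= K * nth 0 (eigvals B) j.
Proof.
move=> jn K0 Ap Bp H.
have [EA _ eA0] := psd_spec Ap; have [EB _ eB0] := psd_spec Bp.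
have QAU := spectral_unitarymx A; have QBU := spectral_unitarymx B.
set QA := spectralmx A in EA QAU *; set eA := spectral_diag A in EA eA0 *.
set QB := spectralmx B in EB QBU *; set eB := spectral_diag B in EB eB0 *.
set al := nth 0 (eigvals A) j; set be := nth 0 (eigvals B) j.
have al0 : 0 <= al := eig_nth_ge0 j Ap.
pose I := [pred i : 'I_n | al <= complex.Re (eA 0 i)].
pose J := [pred i : 'I_n | complex.Re (eB 0 i) <= be].
have cI : (j.+1 <= #|I|)%N.
  have := @sort_count_ge R (evs A) j; rewrite size_evs => /(_ jn) /leq_trans; apply.
  by rewrite count_map -cnt.
have cJ : (n - j <= #|J|)%N.
  have := @sort_count_le R (evs B) j; rewrite size_evs => /(_ jn) /leq_trans; apply.
  by rewrite count_map -cnt.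
have hIJ : (n < #|I| + #|J|)%N.
  have e : (j.+1 + (n - j))%N = n.+1 by rewrite addSn subnKC // ltnW.
  by apply: leq_trans (leq_add cI cJ); rewrite e.
have [x [xnz xI xJ]] := dim_arg QAU QBU hIJ.
have nx : 0 < nrm x by rewrite lt_def nrm_eq0 xnz nrm_ge0.
have L : (al ^+ 2)%:C%C * nrm x <= qf (A *m A) x.
  have AA : A *m A = QA^t* *m diag_mx (\row_i (eA 0 i * eA 0 i)) *m QA.
    rewrite EA !mulmxA -(mulmxA _ QA) (unitary_Kt QAU) mulmx1.
    by rewrite -(mulmxA (QA^t*) (diag_mx eA)) (mulmx_diag eA eA).
  rewrite AA; apply: qf_lower QAU _ => i nz.
  have iI : i \in I by case: (boolP (i \in I)) => // /xI E; rewrite E eqxx in nz.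
  rewrite mxE (ge0_ReC (eA0 i)) -rmorphM lecR expr2.
  by apply: ler_pM.
have U : qf B x <= be%:C%C * nrm x.
  rewrite EB; apply: qf_upper QBU _ => i nz.
  have iJ : i \in J by case: (boolP (i \in J)) => // /xJ E; rewrite E eqxx in nz.
  by rewrite (ge0_ReC (eB0 i)) lecR.
have K0' : 0 <= K%:C%C by rewrite ler0c.
have := le_trans L (le_trans (H x) (ler_wpM2l K0' U)).
rewrite mulrA -rmorphM ler_pM2r //.
by rewrite lecR.
Qed.

Lemma schatten_aux (s t : seq R) (K p : R) : size s = size t -> 0 < p -> 0 <= K ->
  (forall x, x \in s -> 0 <= x) -> (forall x, x \in t -> 0 <= x) ->
  (forall i, (i < size s)%N -> nth 0 s i <= Num.sqrt K * Num.sqrt (nth 0 t i)) ->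
  powR (\sum_(x <- s) powR x p) p^-1 <=
  Num.sqrt K * Num.sqrt (powR (\sum_(x <- t) powR x (p / 2)) (p / 2)^-1).
Proof.
move=> Hsz p0 K0 s0 t0 H.
set B := \sum_(x <- t) powR x (p / 2).
have B0 : 0 <= B by rewrite /B sumr_ge0 // => x _; exact: powR_ge0.
have sK0 : 0 <= Num.sqrt K := sqrtr_ge0 K.
have pnz : p != 0 by rewrite gt_eqF.
have step1 : \sum_(x <- s) powR x p <= powR (Num.sqrt K) p * B.
  rewrite /B (big_nth 0) [X in _ <= _ * X](big_nth 0) -Hsz mulr_sumr !big_mkord.
  apply: ler_sum => i _.
  have si0 : 0 <= nth 0 s i by apply: s0; exact: mem_nth.
  have ti0 : 0 <= nth 0 t i by apply: t0; rewrite mem_nth // -Hsz.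
  have -> : powR (nth 0 t i) (p / 2) = powR (Num.sqrt (nth 0 t i)) p.
    by rewrite -powR12_sqrt // -powRrM mulrC.
  rewrite -powRM ?sqrtr_ge0 //.
  apply: (ge0_ler_powR (ltW p0)); rewrite ?nnegrE ?mulr_ge0 ?sqrtr_ge0 //.
  exact: H.
have pi0 : 0 <= p^-1 by rewrite invr_ge0 ltW.
apply: le_trans.
  apply: (ge0_ler_powR pi0); last exact: step1.
    by rewrite nnegrE sumr_ge0 // => x _; exact: powR_ge0.
  by rewrite nnegrE mulr_ge0 // powR_ge0.
rewrite powRM ?powR_ge0 // -powRrM mulfV // powRr1 //.
rewrite -(@powR12_sqrt _ (B `^ (p / 2)^-1) (powR_ge0 _ _)) -powRrM.
have -> : (p / 2)^-1 * 2^-1 = p^-1 by field.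
by [].
Qed.

End P7.

Unset Implicit Arguments. Set Strict Implicit. Set Printing Implicit Defensive.

Import numFieldNormedType.Exports.
Local Open Scope classical_set_scope.

Theorem theorem4p2 (R : realType) (n : nat) (T S : 'M[R[i]]_n)
    (e f g h : R -> R) :
  {within [set x : R | 0 <= x], continuous e} ->
  {within [set x : R | 0 <= x], continuous f} ->
  {within [set x : R | 0 <= x], continuous g} ->
  {within [set x : R | 0 <= x], continuous h} ->
  (forall t : R, 0 <= t -> 0 <= e t) ->
  (forall t : R, 0 <= t -> 0 <= f t) ->
  (forall t : R, 0 <= t -> 0 <= g t) ->
  (forall t : R, 0 <= t -> 0 <= h t) ->
  (forall t : R, 0 <= t -> f t * g t = t) ->
  (forall t : R, 0 <= t -> e t * h t = t) ->
  let G := fcalc (fun t => g t ^+ 2) (absmx (adjmx T))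
           + fcalc (fun t => h t ^+ 2) (absmx (adjmx S)) in
  let F := fcalc (fun t => f t ^+ 2) (absmx T)
           + fcalc (fun t => e t ^+ 2) (absmx S) in
  (forall j : 'I_n,
      sv (T + S) j <= Num.sqrt (opnorm G) * Num.sqrt (sv F j)) /\
  (forall p : R, 0 < p ->
      schatten p (T + S) <= Num.sqrt (opnorm G) * Num.sqrt (schatten (p / 2) F)).
Proof.
move=> _ _ _ _ e0 f0 g0 h0 fg eh G F.
have sq0 : forall (phi : R -> R) (t : R), 0 <= t -> 0 <= phi t ^+ 2.
  by move=> phi t _; exact: sqr_ge0.
have Gp : psdmx G.
  by apply: psdD; (apply: fcalc_psd; [move=> t _; exact: sqr_ge0 | exact: absmx_psd]).
have Fp : psdmx F.
  by apply: psdD; (apply: fcalc_psd; [move=> t _; exact: sqr_ge0 | exact: absmx_psd]).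
have aG : absmx G = G := absmx_psd_id Gp.
have aF : absmx F = F := absmx_psd_id Fp.
have K0 : 0 <= opnorm G by rewrite /opnorm /sv /singvals aG; exact: eig_nth_ge0.
have hG : forall w, qf G w <= (opnorm G)%:C%C * nrm w.
  move=> w; have [EG _ eG0] := psd_spec Gp.
  rewrite {1}EG; apply: qf_upper (spectral_unitarymx G) _ => i _.
  rewrite (ge0_ReC (eG0 i)) lecR /opnorm /sv /singvals aG eigvalsE.
  apply: sort_head_ge; apply: map_f; exact: mem_enum.
have LW : forall x, qf (adjmx (T + S) *m (T + S)) x <= (opnorm G)%:C%C * qf F x.
  move=> x; set w := x *m adjmx (T + S).
  have Ew : qf (adjmx (T + S) *m (T + S)) x = nrm w by rewrite /qf /nrm /w adjM adjK !mulmxA.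
  rewrite Ew.
  have CS := @loewner_cs R n T S e f g h fg eh x w.
  move: CS; rewrite -/w -/(nrm w) ger0_norm ?nrm_ge0 // => CS.
  have CS2 := le_trans CS (ler_wpM2l (qf_psd x Fp) (hG w)).
  have [w0|wnz] := eqVneq (nrm w) 0.
    by rewrite w0 mulr_ge0 ?ler0c ?qf_psd.
  have wp : 0 < nrm w by rewrite lt_def wnz nrm_ge0.
  by rewrite mulrCA mulrA expr2 ler_pM2r // mulrC in CS2.
have P1 : forall j : nat, (j < n)%N ->
    sv (T + S) j <= Num.sqrt (opnorm G) * Num.sqrt (sv F j).
  move=> j jn.
  have E := eig_compare jn K0 (absmx_psd (T + S)) Fp.
  have E2 : (nth 0 (eigvals (absmx (T + S))) j) ^+ 2 <= opnorm G * nth 0 (eigvals F) j.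
    by apply: E => x; rewrite absmx_sq; exact: LW.
  rewrite /sv /singvals aF.
  have al0 := eig_nth_ge0 j (absmx_psd (T + S)).
  rewrite -sqrtrM // -(ger0_norm al0) -sqrtr_sqr ler_sqrt //.
  by rewrite mulr_ge0 // eig_nth_ge0.
split; first by move=> j; exact: P1.
move=> p p0; rewrite /schatten.
apply: (schatten_aux (K := opnorm G) (s := singvals (T + S)) (t := singvals F)).
- by rewrite /singvals aF /eigvals !size_sort !size_map.
- exact: p0.
- exact: K0.
- move=> v vin; apply: (evs_ge0 (absmx_psd (T + S))).
  by move: vin; rewrite /singvals eigvalsE mem_sort.
- move=> v vin; apply: (evs_ge0 Fp).
  by move: vin; rewrite /singvals aF eigvalsE mem_sort.
- move=> i; rewrite /singvals eigvalsE size_sort size_evs => lt_in.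
  exact: P1.
Qed.
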